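(* Let $B=\prod_{i=1}^d[\alpha_i,\beta_i]$ be an axis-parallel box in $\mathbb{R}^d$, let $\lambda$ be a vertex of $B$, and let $B',B''$ be axis-parallel boxes in $\mathbb{R}^d$ with $\lambda\in B'$ and $\lambda\notin B''$. Then there exists a face $F$ of $B$ with $F\cap B''=\emptyset$ and $F\cap B'\neq\emptyset$.
   Context: For a box $B=[\alpha_1,\beta_1]\times\dots\times[\alpha_d,\beta_d]$: a vertex is a point $(\lambda_1,\dots,\lambda_d)$ with $\lambda_j\in\{\alpha_j,\beta_j\}$ for all $j$; a face of $B$ is a set of the form $B\cap\{x: x_j=\alpha_j\}$ or $B\cap\{x:x_j=\beta_j\}$ for some $j\in[d]$. *)

(* Defs.v *)
From mathcomp Require Import all_boot all_order all_algebra.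
Set Implicit Arguments. Unset Strict Implicit. Unset Printing Implicit Defensive.
Import Order.TTheory GRing.Theory Num.Theory.
Local Open Scope ring_scope.

Section Boxes.
Variables (R : realFieldType) (d : nat).

Definition box (a b : 'I_d -> R) : ('I_d -> R) -> Prop :=
  fun x => forall i, a i <= x i <= b i.

Definition box_wf (a b : 'I_d -> R) : Prop := forall i, a i <= b i.

Definition is_vertex (a b : 'I_d -> R) (l : 'I_d -> R) : Prop :=
  forall j, l j = a j \/ l j = b j.

Definition is_face (a b : 'I_d -> R) (F : ('I_d -> R) -> Prop) : Prop :=
  exists j : 'I_d,
    F = (fun x => box a b x /\ x j = a j) \/
    F = (fun x => box a b x /\ x j = b j).
End Boxes.

(* Main.v *)
Require Import Defs.
From mathcomp Require Import all_boot all_order all_algebra.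
Import Order.TTheory GRing.Theory Num.Theory.
Local Open Scope ring_scope.

Theorem lemma4 (R : realFieldType) (d : nat)
    (a b a1 b1 a2 b2 lam : 'I_d -> R) :
  box_wf a b -> box_wf a1 b1 -> box_wf a2 b2 ->
  is_vertex a b lam ->
  box a1 b1 lam -> ~ box a2 b2 lam ->
  exists F : ('I_d -> R) -> Prop,
    is_face a b F /\
    (forall x, F x -> ~ box a2 b2 x) /\
    (exists x, F x /\ box a1 b1 x).
Proof.
move=> wf _ _ hv h1 h2.
have lamB : box a b lam.
  by move=> i; case: (hv i) => ->; rewrite lexx ?wf.
have [j hj] : exists j, ~~ (a2 j <= lam j <= b2 j).
  apply/existsP; apply/negP => /forallP H; apply: h2 => i; exact: H.
exists (fun x => box a b x /\ x j = lam j); split; last split.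
- by exists j; case: (hv j) => ->; [left|right].
- by move=> x [_ E] /(_ j); rewrite E; apply/negP.
- by exists lam.
Qed.
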